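(* Let $W=(V,B)$ be a non-degenerate formed space of Witt index $\omega\ge2$ as in the context, and let $1<k<\omega$. Then the polar Grassmann graph on singular $k$-subspaces of $W$ is not distance-regular.
   Context: $V$ is a finite-dimensional vector space over $\mathbb{F}_q$ and $W=(V,B)$ is one of: a symplectic space of dimension $2\omega$; an orthogonal space of dimension $2\omega+1$, of plus type of dimension $2\omega$, or of minus type of dimension $2\omega+2$; a unitary space of dimension $2\omega+1$ or $2\omega$ ($q$ a square). A subspace is singular if it is totally isotropic (totally singular in the orthogonal case); maximal singular subspaces have dimension $\omega$. For $k<\omega$ the polar Grassmann graph has as vertices the singular $k$-subspaces, two distinct vertices $u,v$ adjacent iff $u+v$ is a singular $(k+1)$-subspace. A connected graph is distance-regular if there are integers $b_i,c_i$ such that for any two vertices $X,Y$ at distance $i$, exactly $c_i$ neighbours of $X$ are at distance $i-1$ from $Y$ and exactly $b_i$ at distance $i+1$ from $Y$. *)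

(* Defs.v *)
From HB Require Import structures.
From mathcomp Require Import all_boot all_algebra.
Import VectorInternalTheory.

Set Implicit Arguments.
Unset Strict Implicit.
Unset Printing Implicit Defensive.
Import GRing.Theory.

HB.instance Definition _ (F : finFieldType) (n : nat) :=
  [Finite of {vspace 'rV[F]_n} by <:].

Section Graph.
Variables (T : finType) (vert : {pred T}) (adj : rel T).

Definition gadj : rel T := fun x y => [&& vert x, vert y & adj x y].

Fixpoint ball (i : nat) (x : T) : {pred T} :=
  if i is j.+1 then
    [pred y | (y \in ball j x) || [exists z, (z \in ball j x) && gadj z y]]
  else [pred y | y == x].

Definition dist_is (i : nat) (x y : T) : bool :=
  (y \in ball i x) && (if i is j.+1 then y \notin ball j x else true).

Definition gconnected : Prop :=
  forall x y, vert x -> vert y -> exists i, y \in ball i x.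

Definition distance_regular : Prop :=
  gconnected /\
  exists b c : nat -> nat, forall (i : nat) (x y : T), vert x -> vert y ->
    dist_is i x y ->
    (0 < i -> #|[pred z | gadj x z && dist_is i.-1 z y]| = c i) /\
    #|[pred z | gadj x z && dist_is i.+1 z y]| = b i.
End Graph.

Local Open Scope ring_scope.

Section Forms.
Variables (F : finFieldType) (n : nat).

Definition bil (M : 'M[F]_n) (x y : 'rV[F]_n) : F := (x *m M *m y^T) 0 0.
Definition sesq (s : {rmorphism F -> F}) (M : 'M[F]_n) (x y : 'rV[F]_n) : F :=
  (x *m M *m (map_mx s y)^T) 0 0.
(* quadratic form Q(x) = x A x^T (every quadratic form on F^n has this shape) *)
Definition quad (A : 'M[F]_n) (x : 'rV[F]_n) : F := (x *m A *m x^T) 0 0.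
Definition polarq (A : 'M[F]_n) (x y : 'rV[F]_n) : F :=
  quad A (x + y) - quad A x - quad A y.
End Forms.

Inductive formed_space (F : finFieldType) (n : nat) : Type :=
| Symplectic of 'M[F]_n
| Orthogonal of 'M[F]_n
| Unitary of {rmorphism F -> F} & 'M[F]_n.

Definition formed_space_ok (F : finFieldType) (n : nat) (W : formed_space F n)
  : Prop :=
  match W with
  | Symplectic M =>
      (forall x, bil M x x = 0) /\
      (forall x, (forall y, bil M x y = 0) -> x = 0)
  | Orthogonal A =>
      forall x, quad A x = 0 -> (forall y, polarq A x y = 0) -> x = 0
  | Unitary s M =>
      (forall x, s (s x) = x) /\ (exists x, s x != x) /\
      (forall x y, sesq s M y x = s (sesq s M x y)) /\
      (forall x, (forall y, sesq s M x y = 0) -> x = 0)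
  end.

Definition singular (F : finFieldType) (n : nat) (W : formed_space F n)
  (U : {vspace 'rV[F]_n}) : bool :=
  match W with
  | Symplectic M =>
      [forall u : 'rV[F]_n, forall v : 'rV[F]_n,
         (u \in U) && (v \in U) ==> (bil M u v == 0)]
  | Orthogonal A =>
      [forall u : 'rV[F]_n, (u \in U) ==> (quad A u == 0)]
  | Unitary s M =>
      [forall u : 'rV[F]_n, forall v : 'rV[F]_n,
         (u \in U) && (v \in U) ==> (sesq s M u v == 0)]
  end.

Definition witt_index (F : finFieldType) (n : nat) (W : formed_space F n)
  (w : nat) : Prop :=
  (exists U, singular W U /\ \dim U = w) /\
  (forall U, singular W U -> (\dim U <= w)%N).

Definition pg_vert (F : finFieldType) (n : nat) (W : formed_space F n)
  (k : nat) : {pred {vspace 'rV[F]_n}} :=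
  [pred U | (\dim U == k) && singular W U].

Definition pg_adj (F : finFieldType) (n : nat) (W : formed_space F n)
  (k : nat) : rel {vspace 'rV[F]_n} :=
  fun U V => [&& U != V, \dim (U + V)%VS == k.+1 & singular W (U + V)%VS].

(* Main.v *)
Require Import Defs.
From HB Require Import structures.
From mathcomp Require Import all_boot all_algebra.
From mathcomp Require Import zify ring.
Import VectorInternalTheory.
Set Implicit Arguments.
Unset Strict Implicit.
Unset Printing Implicit Defensive.
Import GRing.Theory.
Local Open Scope ring_scope.

Record FormI (F : finFieldType) (n : nat) := {
  fB : 'rV[F]_n -> 'rV[F]_n -> F;
  fsig : F -> F;
  ftau : F -> F;
  fg : 'rV[F]_n -> 'cV[F]_n;
  fiso : 'rV[F]_n -> bool;
  fsing : {vspace 'rV[F]_n} -> bool;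
  fB_g : forall x y, fB x y = (x *m fg y) 0 0;
  fg_D : forall y z, fg (y + z) = fg y + fg z;
  fg_Z : forall a y, fg (a *: y) = fsig a *: fg y;
  fsig_tau : forall a, fsig (ftau a) = a;
  fsig_0 : fsig 0 = 0;
  fnd : forall x, fiso x -> (forall y, fB x y = 0) -> x = 0;
  fBrefl : forall x y, fB x y = 0 -> fB y x = 0;
  ffix : forall x y, fiso x -> fB x x = 0 -> fB x y != 0 ->
           exists t, fiso (y + t *: x);
  fsing_B : forall S x y, fsing S -> x \in S -> y \in S -> fB x y = 0;
  fsing_iso : forall S x, fsing S -> x \in S -> fiso x;
  fsing_sub : forall S T, (S <= T)%VS -> fsing T -> fsing S;
  fsing_ext : forall S y, fsing S -> (forall s, s \in S -> fB s y = 0) ->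
           fiso y -> fsing (S + <[y]>)%VS;
  fsing0 : fsing 0%VS
}.

Section Generic.
Variables (F : finFieldType) (n : nat) (I : FormI F n).
Local Notation B := (fB I).
Local Notation V := 'rV[F]_n.

Lemma BDl x y z : B (x + y) z = B x z + B y z.
Proof. by rewrite !fB_g mulmxDl mxE. Qed.

Lemma BZl a x z : B (a *: x) z = a * B x z.
Proof. by rewrite !fB_g -scalemxAl mxE. Qed.

Lemma B0l z : B 0 z = 0.
Proof. by rewrite -(scale0r 0) BZl mul0r. Qed.

Lemma BDr x y z : B x (y + z) = B x y + B x z.
Proof. by rewrite !fB_g fg_D mulmxDr mxE. Qed.

Lemma BZr a x z : B x (a *: z) = fsig I a * B x z.
Proof. by rewrite !fB_g fg_Z -scalemxAr mxE. Qed.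

Lemma Brefl x y : B x y = 0 -> B y x = 0.
Proof. exact: fBrefl. Qed.

Lemma Brefl_neq x y : B x y != 0 -> B y x != 0.
Proof. by apply: contra => /eqP /fBrefl ->. Qed.

Lemma fg_sum (m : nat) (f : 'I_m -> V) : fg I (\sum_i f i) = \sum_i fg I (f i).
Proof.
elim/big_rec2: _ => [|i a b _ <-]; last by rewrite fg_D.
by rewrite -(scale0r 0) fg_Z fsig_0 scale0r.
Qed.

Lemma vanish_span (s : seq V) y : (forall x, x \in s -> B x y = 0) ->
  forall e, e \in <<s>>%VS -> B e y = 0.
Proof.
elim: s => [|x s IH] H e.
  by rewrite span_nil memv0 => /eqP ->; rewrite B0l.
rewrite span_cons => /memv_addP [u /vlineP [c ->] [v Hv ->]].
rewrite BDl BZl H ?inE ?eqxx // IH ?mulr0 ?addr0 // => z Hz.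
by apply: H; rewrite inE Hz orbT.
Qed.

Lemma vanish_add (S : {vspace V}) x y : (forall s, s \in S -> B s y = 0) ->
  B x y = 0 -> forall e, e \in (S + <[x]>)%VS -> B e y = 0.
Proof.
move=> HS Hx e /memv_addP [u Hu [v /vlineP [c ->] ->]].
by rewrite BDl BZl Hx HS // mulr0 addr0.
Qed.

Lemma notin_wit (S : {vspace V}) x w : (forall s, s \in S -> B s w = 0) ->
  B x w != 0 -> x \notin S.
Proof. by move=> H; apply: contra => /H ->. Qed.

Lemma dim_add_line (S : {vspace V}) x : x \notin S ->
  \dim (S + <[x]>)%VS = (\dim S).+1.
Proof.
move=> xS.
have x0 : x != 0 by apply: contra xS => /eqP ->; rewrite mem0v.
have := dimv_sum_cap S <[x]>; rewrite dim_vline x0.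
suff -> : (S :&: <[x]>)%VS = 0%VS by rewrite dimv0 addn0 addn1.
apply/eqP; rewrite -subv0; apply/subvP => z /memv_capP [zS /vlineP [c zc]].
rewrite memv0; apply/eqP; move: zS; rewrite zc.
have [->|c0] := eqVneq c 0; first by rewrite scale0r.
by move/(memvZ c^-1); rewrite scalerA mulVf // scale1r (negbTE xS).
Qed.


Lemma tuple_mem m (X : m.-tuple V) (i : 'I_m) : X`_i \in <<X>>%VS.
Proof. by apply: memv_span; apply: mem_nth; rewrite size_tuple. Qed.

Lemma tool m (X : m.-tuple V) : free X -> fsing I <<X>>%VS -> forall j : 'I_m,
  exists y, [/\ fiso I y, B X`_j y != 0 & forall i : 'I_m, i != j -> B X`_i y = 0].
Proof.
move=> frX sX j.
pose Gm : 'M[F]_(n, m) := \matrix_(a, i) fg I X`_i a 0.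
have HG : forall y i, (y *m Gm) 0 i = B y X`_i.
  by move=> y i; rewrite fB_g !mxE; apply: eq_bigr => a _; rewrite !mxE.
have rk : row_full Gm.
  have : row_free Gm^T; last by rewrite /row_free mxrank_tr.
  rewrite -kermx_eq0; apply/rowV0P => v /sub_kermxP vG.
  pose z := \sum_i ftau I (v 0 i) *: X`_i.
  have gz : fg I z = 0.
    rewrite fg_sum; apply/matrixP => a b; rewrite (ord1 b) summxE !mxE.
    transitivity ((v *m Gm^T) 0 a); last by rewrite vG mxE.
    rewrite mxE; apply: eq_bigr => i _; rewrite fg_Z fsig_tau !mxE.
    done.
  have z0 : z = 0.
    apply: (@fnd _ _ I).
      apply: (fsing_iso sX); apply: memv_suml => i _; apply: memvZ.
      exact: tuple_mem.
    by move=> y; apply: fBrefl; rewrite fB_g gz mulmx0 mxE.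
  have := (freeP frX) _ z0 => Hk.
  apply/rowP => i; rewrite mxE -[v 0 i](fsig_tau I) Hk fsig_0 //.
pose delta : 'rV[F]_m := \row_i (i == j)%:R.
have /submxP [D HD] : (delta <= Gm)%MS by apply: submx_full.
have HDi : forall i : 'I_m, B D X`_i = (i == j)%:R by move=> i; rewrite -[LHS]HG -HD mxE.
have Xj_iso : fiso I X`_j by apply: (fsing_iso sX); apply: tuple_mem.
have BXX : forall i i' : 'I_m, B X`_i X`_i' = 0.
  by move=> i i'; apply: (fsing_B sX); apply: tuple_mem.
have nz : B X`_j D != 0 by apply: Brefl_neq; rewrite HDi eqxx oner_eq0.
have [t Ht] := ffix Xj_iso (BXX j j) nz.
exists (D + t *: X`_j); split => //.
  by rewrite BDr BZr BXX mulr0 addr0.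
move=> i ij; rewrite BDr BZr BXX mulr0 addr0; apply/fBrefl.
by rewrite HDi (negbTE ij).
Qed.

End Generic.

Section GraphLemmas.
Variables (T : finType) (vert : {pred T}) (adj : rel T).

Lemma ball1E x y : (y \in ball vert adj 1 x) = (y == x) || gadj vert adj x y.
Proof.
rewrite /= !inE; congr orb; apply/existsP/idP => [[z /andP [/eqP <- //]]|h].
by exists x; rewrite inE eqxx.
Qed.

Lemma dist1E z y : dist_is vert adj 1 z y = (y != z) && gadj vert adj z y.
Proof.
rewrite /dist_is ball1E /= inE.
by case: eqP => //= _; rewrite andbT.
Qed.

Lemma dist2I x y z : gadj vert adj x z -> gadj vert adj z y -> y != x ->
  ~~ gadj vert adj x y -> dist_is vert adj 2 x y.
Proof.
move=> xz zy yx nxy; rewrite /dist_is ball1E (negbTE yx) (negbTE nxy) andbT.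
rewrite /= !inE; apply/orP; right; apply/existsP; exists z.
by rewrite ball1E xz orbT zy.
Qed.
End GraphLemmas.

Lemma subv_addl' (K : fieldType) (vT : vectType K) (U V W : {vspace vT}) :
  (U <= V)%VS -> (U <= V + W)%VS.
Proof. by move=> h; apply: subv_trans h (addvSl _ _). Qed.
Lemma subv_addr' (K : fieldType) (vT : vectType K) (U V W : {vspace vT}) :
  (U <= W)%VS -> (U <= V + W)%VS.
Proof. by move=> h; apply: subv_trans h (addvSr _ _). Qed.

Ltac subsum := first [ exact: subvv | apply: subv_addl'; subsum | apply: subv_addr'; subsum ].
Ltac veq := apply/eqP; rewrite eqEsubv !subv_add; repeat (apply/andP; split); subsum.

Lemma line_in (K : fieldType) (vT : vectType K) (x : vT) (S : {vspace vT}) :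
  (<[x]> <= S)%VS -> x \in S.
Proof. by move/subvP; apply; apply: memv_line. Qed.

Lemma ar1 m d : (m.+4 + d = m.+2 + m.+2)%N -> d = m. Proof. lia. Qed.
Lemma ar2 m d : (m.+3 + d = m.+2 + m.+2)%N -> d = m.+1. Proof. lia. Qed.
Lemma ar3 m a d : (d <= m)%N -> (a + d = m.+1 + m.+1)%N -> (m.+2 <= a)%N. Proof. lia. Qed.

Section Main.
Variables (F : finFieldType) (n : nat) (I : FormI F n).
Local Notation B := (fB I).
Local Notation V := 'rV[F]_n.

Lemma neqI (S T : {vspace V}) x : x \in S -> x \notin T -> S != T.
Proof. by move=> xS xT; apply/eqP => ST; move: xT; rewrite -ST xS. Qed.

Theorem main_abs (U : {vspace V}) k (vert : {pred {vspace V}}) (adj : rel {vspace V}) :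
  (forall S, vert S = (\dim S == k) && fsing I S) ->
  (forall S T, adj S T = [&& S != T, \dim (S + T)%VS == k.+1 & fsing I (S + T)%VS]) ->
  fsing I U -> (k < \dim U)%N -> (1 < k)%N ->
  ~ distance_regular vert adj.
Proof.
move=> vertE adjE sU kw k1 [_ [b [c Hbc]]].
case: k kw k1 vertE adjE Hbc => [|[|m]] // kw _ vertE adjE Hbc.
set w := \dim U in kw.
pose bs := vbasis U.
have frb : free bs := basis_free (vbasisP U).
have spb : (<<bs>> = U)%VS := span_basis (vbasisP U).
pose bv i := bs`_i.
have bvU : forall i, bv i \in U.
  move=> i; case: (ltnP i (size bs)) => h.
    by apply: vbasis_mem; apply: mem_nth.
  by rewrite /bv nth_default // mem0v.
have UB : forall x y, x \in U -> y \in U -> B x y = 0 by move=> x y; apply: fsing_B.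
have wit : forall j, (j < w)%N -> exists y, [/\ fiso I y, B (bv j) y != 0 &
    forall i, (i < w)%N -> i != j -> B (bv i) y = 0].
  move=> j jw; have sb : fsing I <<bs>>%VS by rewrite spb.
  have [y [y1 y2 y3]] := tool frb sb (Ordinal jw).
  by exists y; split => // i iw ij; apply: (y3 (Ordinal iw)).
pose Em i := (<<[seq bv l | l <- iota 0 i]>>)%VS.
have EmU : forall i, (Em i <= U)%VS.
  move=> i; apply/span_subvP; move=> x /mapP [l _ ->]; exact: bvU.
have Em_van : forall j y, (forall i, (i < w)%N -> i != j -> B (bv i) y = 0) ->
    forall i, (i <= j)%N -> (j < w)%N -> forall e, e \in Em i -> B e y = 0.
  move=> j y H i ij jw; apply: vanish_span => x /mapP [l]; rewrite mem_iota => /andP [_ li] ->.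
  by apply: H; [lia | rewrite neq_ltn; apply/orP; left; lia].
have Em_dim : forall i, (i <= w)%N -> \dim (Em i) = i.
  elim=> [|i IH] iw; first by rewrite /Em /= span_nil dimv0.
  rewrite /Em.
  have -> : iota 0 i.+1 = iota 0 i ++ [:: i] by rewrite -addn1 iotaD.
  rewrite map_cat span_cat /= span_seq1 dim_add_line ?IH //; first lia.
  have [y [_ yn yv]] := wit i iw.
  by apply: (notin_wit _ yn); apply: (Em_van i).
have notinU : forall (S : {vspace V}) x u, (S <= U)%VS -> u \in U -> B x u != 0 -> x \notin S.
  move=> S x u SU uU xu; apply: notin_wit xu => s sS; apply: UB => //; exact: (subvP SU).
have h0 : (m < w)%N by lia.
have h1 : (m.+1 < w)%N by lia.
have h2 : (m.+2 < w)%N by lia.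
pose E := Em m. pose p := bv m. pose q := bv m.+1. pose r := bv m.+2.
have dE : \dim E = m by apply: Em_dim; lia.
have EU : (E <= U)%VS := EmU m.
have pU : p \in U := bvU m.
have qU : q \in U := bvU m.+1.
have rU : r \in U := bvU m.+2.
have [yp [ipp npp vpp]] := wit m h0.
have [yq [iqq nqq vqq]] := wit m.+1 h1.
have [yr [irr nrr vrr]] := wit m.+2 h2.
have Evp : forall e, e \in E -> B e yp = 0 := Em_van m yp vpp m (leqnn m) h0.
have Evq : forall e, e \in E -> B e yq = 0 := Em_van m.+1 yq vqq m (leqnSn m) h1.
have Evr : forall e, e \in E -> B e yr = 0 := Em_van m.+2 yr vrr m (leqW (leqnSn m)) h2.
have Bqp : B q yp = 0 by apply: vpp => //; rewrite gtn_eqF.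
have Brp : B r yp = 0 by apply: vpp => //; rewrite gtn_eqF // ltnW.
have Bpq : B p yq = 0 by apply: vqq => //; rewrite ltn_eqF.
have Bpr : B p yr = 0 by apply: vrr => //; rewrite ltn_eqF // ltnW.
have Bqr : B q yr = 0 by apply: vrr => //; rewrite ltn_eqF.
pose t := - B yr yp / B p yp.
pose v := t *: p + yr.
have Bvyp : B v yp = 0 by rewrite BDl BZl /t !mulNr divfK // addNr.
have Bvb : forall i, (i < w)%N -> i != m.+2 -> B (bv i) v = 0.
  move=> i iw ii; apply: Brefl; rewrite BDl BZl (UB p) // mulr0 add0r.
  by apply: Brefl; apply: vrr.
have Bvr : B v r != 0.
  by rewrite BDl BZl (UB p) // mulr0 add0r; apply: Brefl_neq.
have ivv : fiso I v.
  have s1 : fsing I (0 + <[yr]>)%VS.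
    apply: fsing_ext => //; first exact: fsing0.
    by move=> s; rewrite memv0 => /eqP ->; rewrite B0l.
  have s2 : fsing I (0 + <[yr]> + <[p]>)%VS.
    apply: fsing_ext => //; last by apply: (fsing_iso sU).
    apply: vanish_add; last by apply: Brefl.
    by move=> s; rewrite memv0 => /eqP ->; rewrite B0l.
  apply: (fsing_iso s2); rewrite /v addrC; apply: memvD.
    by apply: line_in; subsum.
  by apply: memvZ; apply: line_in; subsum.
have Evv : forall e, e \in E -> B e v = 0 := Em_van m.+2 v Bvb m (leqW (leqnSn m)) h2.
have Bpv : B p v = 0 by apply: Bvb => //; rewrite ltn_eqF // ltnW.
have Bqv : B q v = 0 by apply: Bvb => //; rewrite ltn_eqF.
have Bypv : B yp v = 0 by apply: Brefl.
pose X := (E + <[p]> + <[q]>)%VS.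
pose Y := (E + <[r]> + <[yp]>)%VS.
pose Z0 := (E + <[q]> + <[r]>)%VS.
pose X2 := (E + <[q]> + <[p]>)%VS.
pose Y2 := (E + <[q]> + <[yp]>)%VS.
pose Z2 := (E + <[q]> + <[v]>)%VS.
have XU : (X <= U)%VS by rewrite !subv_add EU -!memvE pU qU.
have Z0U : (Z0 <= U)%VS by rewrite !subv_add EU -!memvE rU qU.
have X2U : (X2 <= U)%VS by rewrite !subv_add EU -!memvE pU qU.
have ErU : (E + <[r]> <= U)%VS by rewrite !subv_add EU -!memvE rU.
have EqU : (E + <[q]> <= U)%VS by rewrite !subv_add EU -!memvE qU.
have Z0pU : (Z0 + <[p]> <= U)%VS by rewrite !subv_add EU -!memvE pU rU qU.
have XrU : (X + <[r]> <= U)%VS by rewrite !subv_add EU -!memvE pU rU qU.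
have X2rU : (X2 + <[r]> <= U)%VS by rewrite !subv_add EU -!memvE pU rU qU.
have nyp : B yp p != 0 by apply: Brefl_neq.
have n1 : p \notin E := notin_wit Evp npp.
have n2 : q \notin (E + <[p]>)%VS := notin_wit (vanish_add Evq Bpq) nqq.
have n3 : r \notin E := notin_wit Evr nrr.
have n4 : yp \notin (E + <[r]>)%VS := notinU _ _ _ ErU pU nyp.
have n5 : q \notin E := notin_wit Evq nqq.
have n6 : r \notin (E + <[q]>)%VS := notin_wit (vanish_add Evr Bqr) nrr.
have n7 : r \notin X := notin_wit (vanish_add (vanish_add Evr Bpr) Bqr) nrr.
have n8 : yp \notin Z0 := notinU _ _ _ Z0U pU nyp.
have n9 : p \notin (E + <[q]>)%VS := notin_wit (vanish_add Evp Bqp) npp.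
have n10 : yp \notin (E + <[q]>)%VS := notinU _ _ _ EqU pU nyp.
have n11 : r \notin X2 := notin_wit (vanish_add (vanish_add Evr Bqr) Bpr) nrr.
have n12 : v \notin (E + <[q]>)%VS := notinU _ _ _ EqU rU Bvr.
have n13 : v \notin X2 := notinU _ _ _ X2U rU Bvr.
have n14 : v \notin Y2.
  apply: (notin_wit _ Bvr); apply: vanish_add; last by apply: Brefl.
  apply: vanish_add; last by apply: UB.
  by move=> e eE; apply: UB => //; apply: (subvP EU).
have n15 : p \notin Z0 := notin_wit (vanish_add (vanish_add Evp Bqp) Brp) npp.
have n16 : yp \notin (Z0 + <[p]>)%VS := notinU _ _ _ Z0pU pU nyp.
have nXyp : yp \notin X := notinU _ _ _ XU pU nyp.
have nX2yp : yp \notin X2 := notinU _ _ _ X2U pU nyp.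
have nZ0v : v \notin Z0 := notinU _ _ _ Z0U rU Bvr.
have dX : \dim X = m.+2 by rewrite !dim_add_line ?dE.
have dY : \dim Y = m.+2 by rewrite !dim_add_line ?dE.
have dZ0 : \dim Z0 = m.+2 by rewrite !dim_add_line ?dE.
have dX2 : \dim X2 = m.+2 by rewrite !dim_add_line ?dE.
have dY2 : \dim Y2 = m.+2 by rewrite !dim_add_line ?dE.
have dZ2 : \dim Z2 = m.+2 by rewrite !dim_add_line ?dE.
have dXr : \dim (X + <[r]>)%VS = m.+3 by rewrite dim_add_line ?dX.
have dZ0y : \dim (Z0 + <[yp]>)%VS = m.+3 by rewrite dim_add_line ?dZ0.
have dX2r : \dim (X2 + <[r]>)%VS = m.+3 by rewrite dim_add_line ?dX2.
have dX2v : \dim (X2 + <[v]>)%VS = m.+3 by rewrite dim_add_line ?dX2.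
have dY2v : \dim (Y2 + <[v]>)%VS = m.+3 by rewrite dim_add_line ?dY2.
have dXY' : \dim (Z0 + <[p]> + <[yp]>)%VS = m.+4.
  rewrite (dim_add_line n16) (dim_add_line n15) dZ0 //.
have sX : fsing I X := fsing_sub XU sU.
have sZ0 : fsing I Z0 := fsing_sub Z0U sU.
have sX2 : fsing I X2 := fsing_sub X2U sU.
have sXr : fsing I (X + <[r]>)%VS := fsing_sub XrU sU.
have sX2r : fsing I (X2 + <[r]>)%VS := fsing_sub X2rU sU.
have sY : fsing I Y := fsing_ext (fsing_sub ErU sU) (vanish_add Evp Brp) ipp.
have sY2 : fsing I Y2 := fsing_ext (fsing_sub EqU sU) (vanish_add Evp Bqp) ipp.
have sZ0y : fsing I (Z0 + <[yp]>)%VS :=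
  fsing_ext sZ0 (vanish_add (vanish_add Evp Bqp) Brp) ipp.
have sZ2 : fsing I Z2 := fsing_ext (fsing_sub EqU sU) (vanish_add Evv Bqv) ivv.
have sX2v : fsing I (X2 + <[v]>)%VS :=
  fsing_ext sX2 (vanish_add (vanish_add Evv Bqv) Bpv) ivv.
have sY2v : fsing I (Y2 + <[v]>)%VS :=
  fsing_ext sY2 (vanish_add (vanish_add Evv Bqv) Bypv) ivv.
have e1 : (X + Z0 = X + <[r]>)%VS by rewrite /X /Z0; veq.
have e2 : (Z0 + Y = Z0 + <[yp]>)%VS by rewrite /Y /Z0; veq.
have e3 : (X + Y = Z0 + <[p]> + <[yp]>)%VS by rewrite /X /Y /Z0; veq.
have e4 : (X2 + Z0 = X2 + <[r]>)%VS by rewrite /X2 /Z0; veq.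
have e5 : (Z0 + Y2 = Z0 + <[yp]>)%VS by rewrite /Y2 /Z0; veq.
have e6 : (X2 + Z2 = X2 + <[v]>)%VS by rewrite /X2 /Z2; veq.
have e7 : (Z2 + Y2 = Y2 + <[v]>)%VS by rewrite /Y2 /Z2; veq.
have gadjI : forall S T, \dim S = m.+2 -> fsing I S -> \dim T = m.+2 -> fsing I T ->
    S != T -> \dim (S + T)%VS = m.+3 -> fsing I (S + T)%VS -> gadj vert adj S T.
  move=> S T dS sS dT sT ST dST sST.
  by rewrite /gadj !vertE adjE dS sS dT sT ST dST sST !eqxx.
have ypY : yp \in Y by apply: line_in; subsum.
have ypY2 : yp \in Y2 by apply: line_in; subsum.
have rZ0 : r \in Z0 by apply: line_in; subsum.
have vZ2 : v \in Z2 by apply: line_in; subsum.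
have gXZ0 : gadj vert adj X Z0.
  apply: gadjI => //; first by rewrite eq_sym; apply: (neqI rZ0 n7).
  by rewrite e1. by rewrite e1.
have gZ0Y : gadj vert adj Z0 Y.
  apply: gadjI => //; first by rewrite eq_sym; apply: (neqI ypY n8).
  by rewrite e2. by rewrite e2.
have gX2Z0 : gadj vert adj X2 Z0.
  apply: gadjI => //; first by rewrite eq_sym; apply: (neqI rZ0 n11).
  by rewrite e4. by rewrite e4.
have gZ0Y2 : gadj vert adj Z0 Y2.
  apply: gadjI => //; first by rewrite eq_sym; apply: (neqI ypY2 n8).
  by rewrite e5. by rewrite e5.
have gX2Z2 : gadj vert adj X2 Z2.
  apply: gadjI => //; first by rewrite eq_sym; apply: (neqI vZ2 n13).
  by rewrite e6. by rewrite e6.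
have gZ2Y2 : gadj vert adj Z2 Y2.
  apply: gadjI => //; first by apply: (neqI vZ2 n14).
  by rewrite e7. by rewrite e7.
have Z0Z2 : Z0 != Z2 by rewrite eq_sym; apply: (neqI vZ2 nZ0v).
have YX : Y != X by apply: (neqI ypY nXyp).
have Y2X2 : Y2 != X2 by apply: (neqI ypY2 nX2yp).
have pX : p \in X by apply: line_in; subsum.
have pX2 : p \in X2 by apply: line_in; subsum.
have nXY : ~~ gadj vert adj X Y.
  rewrite /gadj adjE; apply/negP => /and3P [_ _ /and3P [_ _ sXY]].
  move: npp; rewrite (fsing_B sXY) ?eqxx //.
    by apply: (subvP (addvSl _ _)).
  by apply: (subvP (addvSr _ _)).
have nXY2 : ~~ gadj vert adj X2 Y2.
  rewrite /gadj adjE; apply/negP => /and3P [_ _ /and3P [_ _ sXY]].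
  move: npp; rewrite (fsing_B sXY) ?eqxx //.
    by apply: (subvP (addvSl _ _)).
  by apply: (subvP (addvSr _ _)).
have d2 : dist_is vert adj 2 X Y := dist2I gXZ0 gZ0Y YX nXY.
have d2' : dist_is vert adj 2 X2 Y2 := dist2I gX2Z0 gZ0Y2 Y2X2 nXY2.
have Z0v : forall e, e \in Z0 -> B e yp = 0 := vanish_add (vanish_add Evp Bqp) Brp.
have uniq : forall Z, gadj vert adj X Z -> gadj vert adj Z Y -> Z = Z0.
  move=> Z; rewrite /gadj !vertE !adjE.
  move=> /and3P [_ /andP [/eqP dZ sZ] /and3P [_ /eqP dXZ sXZ]].
  move=> /and3P [_ _ /and3P [_ /eqP dZY sZY]].
  have dXY : \dim (X + Y)%VS = m.+4 by rewrite e3.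
  have dcap : \dim (X :&: Y)%VS = m.
    by apply: ar1; have := dimv_sum_cap X Y; rewrite dXY dX dY.
  have dZX : \dim (Z :&: X)%VS = m.+1.
    by apply: ar2; have := dimv_sum_cap Z X; rewrite addvC dXZ dX dZ.
  have dZY' : \dim (Z :&: Y)%VS = m.+1.
    by apply: ar2; have := dimv_sum_cap Z Y; rewrite dZY dY dZ.
  set A := (Z :&: X)%VS; set C := (Z :&: Y)%VS.
  have hAC : (A :&: C <= X :&: Y)%VS by apply: capvS; apply: capvSr.
  have dAC : (m.+2 <= \dim (A + C))%N.
    apply: (ar3 (d := \dim (A :&: C))); first by rewrite -dcap; apply: dimvS.
    by have := dimv_sum_cap A C; rewrite dZX dZY'.
  have ACZ : (A + C <= Z)%VS by rewrite subv_add !capvSl.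
  have ACe : (A + C)%VS = Z by apply/eqP; rewrite eqEdim ACZ dZ dAC.
  have ZXY : (Z <= X + Y)%VS by rewrite -ACe; apply: addvS; apply: capvSr.
  have ZZ0 : (Z <= Z0)%VS.
    apply/subvP => z zZ.
    have zXZ : z \in (X + Z)%VS := subvP (addvSr _ _) _ zZ.
    have pXZ : p \in (X + Z)%VS := subvP (addvSl _ _) _ pX.
    have zZY : z \in (Z + Y)%VS := subvP (addvSl _ _) _ zZ.
    have ypZY : yp \in (Z + Y)%VS := subvP (addvSr _ _) _ ypY.
    have h1' : B z p = 0 := fsing_B sXZ zXZ pXZ.
    have h2' : B z yp = 0 := fsing_B sZY zZY ypZY.
    have := subvP ZXY z zZ; rewrite e3.
    move=> /memv_addP [u /memv_addP [z0 z0Z0 [pp /vlineP [c1 ->] ->]] [yy /vlineP [c2 ->] zE]].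
    have z0U : z0 \in U := subvP Z0U _ z0Z0.
    subst z.
    move: h1'; rewrite !BDl !BZl (UB z0 p) // (UB p p) // mulr0 !add0r.
    move=> /eqP; rewrite mulf_eq0 (negbTE nyp) orbF => /eqP c20.
    subst c2. move: h2'; rewrite scale0r addr0 BDl BZl Z0v // add0r.
    move=> /eqP; rewrite mulf_eq0 (negbTE npp) orbF => /eqP c10.
    by subst c1; rewrite !scale0r !addr0.
  by apply/eqP; rewrite eqEdim ZZ0 dZ dZ0 leqnn.
have vX : vert X by rewrite vertE dX eqxx sX.
have vY : vert Y by rewrite vertE dY eqxx sY.
have vX2 : vert X2 by rewrite vertE dX2 eqxx sX2.
have vY2 : vert Y2 by rewrite vertE dY2 eqxx sY2.
have [Hc _] := Hbc 2 X Y vX vY d2.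
have [Hc' _] := Hbc 2 X2 Y2 vX2 vY2 d2'.
have cle : (c 2 <= 1)%N.
  rewrite -(Hc erefl); apply: (@leq_trans #|pred1 Z0|); last by rewrite card1.
  apply: subset_leq_card; apply/subsetP => Z.
  rewrite !inE => /andP [gXZ]; rewrite dist1E => /andP [_ gZY].
  by rewrite (uniq Z gXZ gZY).
have cge : (2 <= c 2)%N.
  rewrite -(Hc' erefl); apply: (@leq_trans #|[set Z0; Z2]|); first by rewrite cards2 Z0Z2.
  apply: subset_leq_card; apply/subsetP => Z; rewrite !inE => /orP [] /eqP ->.
    rewrite gX2Z0 dist1E gZ0Y2 andbT /=.
    by apply: (neqI ypY2 n8).
  rewrite gX2Z2 dist1E gZ2Y2 andbT /= eq_sym.
  by apply: (neqI vZ2 n14).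
by have := leq_trans cge cle.
Qed.
End Main.

Section BL.
Variables (F : finFieldType) (n : nat).
Local Notation V := 'rV[F]_n.
Definition bl (N : 'M[F]_n) (x y : V) : F := (x *m N *m y^T) 0 0.

Lemma blDl N x y z : bl N (x + y) z = bl N x z + bl N y z.
Proof. by rewrite /bl !mulmxDl mxE. Qed.
Lemma blZl N a x z : bl N (a *: x) z = a * bl N x z.
Proof. by rewrite /bl -!scalemxAl mxE. Qed.
Lemma blDr N x y z : bl N x (y + z) = bl N x y + bl N x z.
Proof. by rewrite /bl linearD /= mulmxDr mxE. Qed.
Lemma blZr N a x z : bl N x (a *: z) = a * bl N x z.
Proof. by rewrite /bl linearZ /= -scalemxAr mxE. Qed.
Lemma blDN N1 N2 x y : bl (N1 + N2) x y = bl N1 x y + bl N2 x y.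
Proof. by rewrite /bl mulmxDr mulmxDl mxE. Qed.
Lemma bl_tr N x y : bl N x y = bl N^T y x.
Proof.
rewrite /bl -[in LHS](trmxK (x *m N *m y^T)) mxE.
by rewrite !trmx_mul trmxK mulmxA.
Qed.
Lemma bl0l N z : bl N 0 z = 0.
Proof. by rewrite /bl !mul0mx mxE. Qed.
Lemma bl_g N x y : bl N x y = (x *m (N *m y^T)) 0 0.
Proof. by rewrite /bl mulmxA. Qed.
End BL.

Section HermType.
Variables (F : finFieldType) (n : nat).
Local Notation V := 'rV[F]_n.
Variables (Bf : V -> V -> F) (sg : F -> F).
Hypothesis HDl : forall x y z, Bf (x + y) z = Bf x z + Bf y z.
Hypothesis HZl : forall a x z, Bf (a *: x) z = a * Bf x z.
Hypothesis HDr : forall x y z, Bf x (y + z) = Bf x y + Bf x z.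
Hypothesis HZr : forall a x z, Bf x (a *: z) = sg a * Bf x z.
Hypothesis Hrefl : forall x y, Bf x y = 0 -> Bf y x = 0.

Definition singF (S : {vspace V}) : bool :=
  [forall u : V, forall v : V, (u \in S) && (v \in S) ==> (Bf u v == 0)].

Lemma H0l z : Bf 0 z = 0.
Proof. by rewrite -(scale0r 0) HZl mul0r. Qed.

Lemma singF_B S x y : singF S -> x \in S -> y \in S -> Bf x y = 0.
Proof.
by move=> /forallP /(_ x) /forallP /(_ y) /implyP H xS yS; apply/eqP; apply: H; rewrite xS.
Qed.

Lemma singF_sub S T : (S <= T)%VS -> singF T -> singF S.
Proof.
move=> ST sT; apply/forallP => u; apply/forallP => v; apply/implyP => /andP [uS vS].
by apply/eqP; apply: (singF_B sT); apply: (subvP ST).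
Qed.

Lemma singF_ext S y : singF S -> (forall s, s \in S -> Bf s y = 0) ->
  Bf y y == 0 -> singF (S + <[y]>)%VS.
Proof.
move=> sS Sy /eqP yy; apply/forallP => u; apply/forallP => v; apply/implyP.
move=> /andP [/memv_addP [s1 s1S [l1 /vlineP [c1 ->] ->]] /memv_addP [s2 s2S [l2 /vlineP [c2 ->] ->]]].
rewrite !HDl !HDr !HZl !HZr yy (singF_B sS s1S s2S) Sy // (Hrefl (Sy _ s2S)).
by rewrite !mulr0 !addr0.
Qed.

Lemma singF0 : singF 0%VS.
Proof.
apply/forallP => u; apply/forallP => v; apply/implyP => /andP [].
by rewrite memv0 => /eqP -> _; rewrite H0l.
Qed.

Lemma singF_iso S x : singF S -> x \in S -> Bf x x == 0.
Proof. by move=> sS xS; rewrite (singF_B sS xS xS). Qed.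
End HermType.

Section Sympl.
Variables (F : finFieldType) (n : nat) (M : 'M[F]_n).
Local Notation V := 'rV[F]_n.
Hypothesis alt : forall x, bil M x x = 0.
Hypothesis nd : forall x, (forall y, bil M x y = 0) -> x = 0.

Lemma altb x : bl M x x = 0. Proof. exact: alt. Qed.

Lemma symp_refl x y : bl M x y = 0 -> bl M y x = 0.
Proof.
move=> h; have := altb (x + y).
by rewrite blDl !blDr h !altb add0r addr0 add0r.
Qed.

Lemma symp_fgD (y z : V) : M *m (y + z)^T = M *m y^T + M *m z^T.
Proof. by rewrite linearD /= mulmxDr. Qed.
Lemma symp_fgZ a (y : V) : M *m (a *: y)^T = id a *: (M *m y^T).
Proof. by rewrite linearZ /= -scalemxAr. Qed.
Lemma symp_fix (x y : V) : bl M x x == 0 -> bl M x x = 0 -> bl M x y != 0 ->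
  exists t : F, bl M (y + t *: x) (y + t *: x) == 0.
Proof. by move=> *; exists 0; apply/eqP; apply: altb. Qed.

Definition sympI : FormI F n := {|
  fB := bl M; fsig := id; ftau := id; fg := fun y => M *m y^T;
  fiso := fun x => bl M x x == 0; fsing := singF (bl M);
  fB_g := bl_g M; fg_D := symp_fgD; fg_Z := symp_fgZ;
  fsig_tau := fun _ => erefl; fsig_0 := erefl;
  fnd := fun x _ H => nd H; fBrefl := symp_refl; ffix := symp_fix;
  fsing_B := singF_B (Bf := bl M);
  fsing_iso := singF_iso (Bf := bl M);
  fsing_sub := singF_sub (Bf := bl M);
  fsing_ext := @singF_ext F n (bl M) id (blDl M) (blZl M) (blDr M) (@blZr _ _ M) symp_refl;
  fsing0 := singF0 (blZl M) |}.
End Sympl.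

Section Unit.
Variables (F : finFieldType) (n : nat) (s : {rmorphism F -> F}) (M : 'M[F]_n).
Local Notation V := 'rV[F]_n.
Hypothesis sinv : forall x, s (s x) = x.
Hypothesis snt : exists x, s x != x.
Hypothesis herm : forall x y, sesq s M y x = s (sesq s M x y).
Hypothesis nd : forall x, (forall y, sesq s M x y = 0) -> x = 0.

Definition uB (x y : V) : F := bl M x (map_mx s y).
Lemma uB_herm x y : uB y x = s (uB x y). Proof. exact: herm. Qed.
Lemma uBDl x y z : uB (x + y) z = uB x z + uB y z. Proof. exact: blDl. Qed.
Lemma uBZl a x z : uB (a *: x) z = a * uB x z. Proof. exact: blZl. Qed.
Lemma uBDr x y z : uB x (y + z) = uB x y + uB x z.
Proof. by rewrite /uB map_mxD blDr. Qed.
Lemma uBZr a x z : uB x (a *: z) = s a * uB x z.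
Proof. by rewrite /uB map_mxZ blZr. Qed.
Lemma u_refl x y : uB x y = 0 -> uB y x = 0.
Proof. by move=> h; rewrite uB_herm h rmorph0. Qed.
Lemma u_fgD (y z : V) : M *m (map_mx s (y + z))^T = M *m (map_mx s y)^T + M *m (map_mx s z)^T.
Proof. by rewrite map_mxD linearD /= mulmxDr. Qed.
Lemma u_fgZ a (y : V) : M *m (map_mx s (a *: y))^T = s a *: (M *m (map_mx s y)^T).
Proof. by rewrite map_mxZ linearZ /= -scalemxAr. Qed.
Lemma u_Bg x y : uB x y = (x *m (M *m (map_mx s y)^T)) 0 0.
Proof. exact: bl_g. Qed.

Lemma u_fix (x y : V) : uB x x == 0 -> uB x x = 0 -> uB x y != 0 ->
  exists t : F, uB (y + t *: x) (y + t *: x) == 0.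
Proof.
move=> _ xx cn; have [z zn] := snt.
set c := uB x y in cn; set h := uB y y.
have sh : s h = h by rewrite /h -uB_herm.
have yx : uB y x = s c by rewrite uB_herm.
pose d := z - s z.
have dn : d != 0 by rewrite /d subr_eq0 eq_sym.
have sd : s d = - d by rewrite /d rmorphB sinv opprB.
pose u := - h * z / d.
have su : s u = h * s z / d.
  rewrite /u rmorphM fmorphV rmorphM rmorphN sh sd.
  by rewrite invrN mulrN !mulNr opprK.
exists (u / c); apply/eqP.
rewrite !uBDl !uBDr !uBZl !uBZr xx yx -/c -/h !mulr0 !addr0.
have -> : s (u / c) * s c = s u by rewrite -rmorphM divfK.
rewrite divfK // su /u /d.
field. exact: dn.
Qed.

Definition unitI : FormI F n := {|
  fB := uB; fsig := s; ftau := s; fg := fun y => M *m (map_mx s y)^T;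
  fiso := fun x => uB x x == 0; fsing := singF uB;
  fB_g := u_Bg; fg_D := u_fgD; fg_Z := u_fgZ;
  fsig_tau := sinv; fsig_0 := rmorph0 s;
  fnd := fun x _ H => nd H; fBrefl := u_refl; ffix := u_fix;
  fsing_B := singF_B (Bf := uB);
  fsing_iso := singF_iso (Bf := uB);
  fsing_sub := singF_sub (Bf := uB);
  fsing_ext := @singF_ext F n uB s uBDl uBZl uBDr uBZr u_refl;
  fsing0 := singF0 uBZl |}.
End Unit.

Section Orth.
Variables (F : finFieldType) (n : nat) (A : 'M[F]_n).
Local Notation V := 'rV[F]_n.
Hypothesis nd : forall x, quad A x = 0 -> (forall y, polarq A x y = 0) -> x = 0.

Lemma quad_bl x : quad A x = bl A x x. Proof. by []. Qed.
Lemma polar_bl2 x y : polarq A x y = bl A x y + bl A y x.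
Proof. rewrite /polarq !quad_bl blDl !blDr; ring. Qed.
Lemma polar_bl x y : polarq A x y = bl (A + A^T) x y.
Proof. by rewrite polar_bl2 blDN [bl A^T _ _]bl_tr trmxK. Qed.
Lemma polar_sym x y : polarq A x y = polarq A y x.
Proof. by rewrite !polar_bl2 addrC. Qed.
Lemma o_refl x y : polarq A x y = 0 -> polarq A y x = 0.
Proof. by rewrite polar_sym. Qed.
Lemma o_Bg x y : polarq A x y = (x *m ((A + A^T) *m y^T)) 0 0.
Proof. by rewrite polar_bl bl_g. Qed.
Lemma o_fgD (y z : V) : (A + A^T) *m (y + z)^T = (A + A^T) *m y^T + (A + A^T) *m z^T.
Proof. by rewrite linearD /= mulmxDr. Qed.
Lemma o_fgZ a (y : V) : (A + A^T) *m (a *: y)^T = id a *: ((A + A^T) *m y^T).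
Proof. by rewrite linearZ /= -scalemxAr. Qed.
Lemma quad_add_line x c y :
  quad A (x + c *: y) = quad A x + c * polarq A x y + c * c * quad A y.
Proof. rewrite !quad_bl polar_bl2 blDl !blDr !blZl !blZr; ring. Qed.

Lemma o_fix (x y : V) : quad A x == 0 -> polarq A x x = 0 -> polarq A x y != 0 ->
  exists t : F, quad A (y + t *: x) == 0.
Proof.
move=> /eqP xx _ cn; exists (- quad A y / polarq A x y); apply/eqP.
rewrite quad_add_line xx [polarq A y x]polar_sym mulr0 addr0.
by field; apply: cn.
Qed.

Definition singQ (S : {vspace V}) : bool :=
  [forall u : V, (u \in S) ==> (quad A u == 0)].

Lemma singQ_q S x : singQ S -> x \in S -> quad A x = 0.
Proof. by move=> /forallP /(_ x) /implyP H xS; apply/eqP; apply: H. Qed.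

Lemma singQ_B S x y : singQ S -> x \in S -> y \in S -> polarq A x y = 0.
Proof.
move=> sS xS yS; rewrite /polarq !(singQ_q sS) ?subrr ?subr0 //.
exact: memvD.
Qed.
Lemma singQ_iso S x : singQ S -> x \in S -> quad A x == 0.
Proof. by move=> sS xS; rewrite (singQ_q sS xS). Qed.
Lemma singQ_sub S T : (S <= T)%VS -> singQ T -> singQ S.
Proof.
move=> ST sT; apply/forallP => u; apply/implyP => uS.
by rewrite (singQ_q sT) //; apply: (subvP ST).
Qed.
Lemma singQ_ext S y : singQ S -> (forall s, s \in S -> polarq A s y = 0) ->
  quad A y == 0 -> singQ (S + <[y]>)%VS.
Proof.
move=> sS Sy /eqP yy; apply/forallP => u; apply/implyP.
move=> /memv_addP [s1 s1S [l1 /vlineP [c1 ->] ->]].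
by rewrite quad_add_line yy Sy // (singQ_q sS s1S) !mulr0 !addr0.
Qed.
Lemma singQ0 : singQ 0%VS.
Proof.
apply/forallP => u; apply/implyP; rewrite memv0 => /eqP ->.
by rewrite quad_bl bl0l.
Qed.

Definition orthI : FormI F n := {|
  fB := polarq A; fsig := id; ftau := id; fg := fun y => (A + A^T) *m y^T;
  fiso := fun x => quad A x == 0; fsing := singQ;
  fB_g := o_Bg; fg_D := o_fgD; fg_Z := o_fgZ;
  fsig_tau := fun _ => erefl; fsig_0 := erefl;
  fnd := fun x ix H => nd (eqP ix) H; fBrefl := o_refl; ffix := o_fix;
  fsing_B := singQ_B; fsing_iso := singQ_iso; fsing_sub := singQ_sub;
  fsing_ext := singQ_ext; fsing0 := singQ0 |}.
End Orth.

Local Close Scope ring_scope.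

Theorem corollary4p4 (F : finFieldType) (n : nat) (W : formed_space F n)
    (w k : nat) :
  formed_space_ok W -> witt_index W w -> (2 <= w)%N -> (1 < k < w)%N ->
  ~ distance_regular (pg_vert W k) (pg_adj W k).
Proof.
move=> ok [[U [sU dU]] _] _ /andP [k1 kw].
have kU : (k < \dim U)%N by rewrite dU.
case: W ok sU => [M [alt nd] | A nd | s M [sinv [snt [herm nd]]]] sU.
- exact: (@main_abs F n (sympI alt nd) U k _ _ (fun _ => erefl) (fun _ _ => erefl) sU kU k1).
- exact: (@main_abs F n (orthI nd) U k _ _ (fun _ => erefl) (fun _ _ => erefl) sU kU k1).
- exact: (@main_abs F n (unitI sinv snt herm nd) U k _ _ (fun _ => erefl) (fun _ _ => erefl) sU kU k1).
Qed.
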